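(* Let $Y_1,Y_2,\ldots$ be i.i.d. Bernoulli$(1/2)$ and let $(Z^k)_k$ be generated by the bit-drop scheme described in the context, independently of $(Y_i)$. For $0\le k\le n$ let $L^a_n(k)$ be the length of a longest common subsequence of $Z^k$ and $Y_1\ldots Y_n$. Let $E^n_1:=\bigcap_{k=1}^{\lfloor 0.45n\rfloor}\{L^a_n(k)=k\}$. Then $\lim_{n\to\infty}P(E^n_1)=1$.
   Context: Bit-drop scheme: let $V_1,V_2,\ldots$ be i.i.d. Bernoulli$(1/2)$ and let $T_3,T_4,\ldots$ be independent, independent of $(V_k)$, with $T_{k+1}$ uniform on $\{2,\ldots,k\}$. Set $Z^2:=V_1V_2$ and, given $Z^k=Z^k_1\ldots Z^k_k$, define $Z^{k+1}_j:=Z^k_j$ for $j<T_{k+1}$, $Z^{k+1}_{T_{k+1}}:=V_{k+1}$, $Z^{k+1}_j:=Z^k_{j-1}$ for $T_{k+1}<j\le k+1$. Convention: $Z^0$ empty, $Z^1:=V_1$. *)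

(* Defs.v *)
From HB Require Import structures.
From mathcomp Require Import all_boot all_order all_algebra.
From mathcomp Require Import all_classical all_reals all_analysis.
Set Implicit Arguments. Unset Strict Implicit. Unset Printing Implicit Defensive.
Import Order.TTheory GRing.Theory Num.Theory.

(* V j = V_j (1-based), T j = T_j (1-based, used for j >= 3).
   Z^0 = [::], Z^1 = V_1, Z^2 = V_1 V_2, and for k >= 2, Z^{k+1} is Z^k with
   V_{k+1} inserted so that it becomes the T_{k+1}-th letter (1-based). *)
Fixpoint bitdrop (V : nat -> bool) (T : nat -> nat) (k : nat) : seq bool :=
  match k with
  | 0 => [::]
  | k'.+1 =>
      if (k' < 2)%N then rcons (bitdrop V T k') (V k)
      else let s := bitdrop V T k' in
           take (T k).-1 s ++ V k :: drop (T k).-1 s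
  end.

Definition lcs (s t : seq bool) : nat :=
  \max_(m : (size s).-tuple bool | subseq (mask m s) t) size (mask m s).

(* All possible values [:: T_3; ...; T_k] of the drop positions up to step k,
   each value T_{j+1} ranging over {2, ..., j}; every combination listed once. *)
Fixpoint tseqs (k : nat) : seq (seq nat) :=
  match k with
  | 0 => [:: [::]]
  | k'.+1 =>
      if (k' < 2)%N then tseqs k'
      else [seq rcons s t | s <- tseqs k', t <- iota 2 (k'.-1)]
  end.

Definition mE1 (n : nat) : nat := (45 * n %/ 100)%N.

(* Finite sample space carrying (Y_1..Y_n, V_1..V_m, T_3..T_m): the uniform
   measure on it is exactly the joint law of these independent variables. *)
Definition outcomes (n : nat) : seq (seq bool * seq bool * seq nat) :=
  flatten [seq flatten [seq [seq (val y, val v, t) | t <- tseqs (mE1 n)]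
                     | v <- enum [set: (mE1 n).-tuple bool]]
          | y <- enum [set: n.-tuple bool]].

Definition E1 (n : nat) (w : seq bool * seq bool * seq nat) : bool :=
  let: (y, v, t) := w in
  let Vf := fun j => nth false v j.-1 in
  let Tf := fun j => nth 0%N t (j - 3) in
  all (fun k => lcs (bitdrop Vf Tf k) y == k) (iota 1 (mE1 n)).

Definition probE1 (R : realType) (n : nat) : R :=
  ((count (E1 n) (outcomes n))%:R / (size (outcomes n))%:R)%R.

(* Main.v *)
Require Import Defs.
From HB Require Import structures.
From mathcomp Require Import all_boot all_order all_algebra.
From mathcomp Require Import all_classical all_reals all_analysis.
From mathcomp Require Import zify ring lra.
Import Order.TTheory GRing.Theory Num.Theory numFieldNormedType.Exports.
Fixpoint bdN (T : nat -> nat) (k : nat) : seq nat :=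
  match k with
  | 0 => [::]
  | k'.+1 =>
      if (k' < 2)%N then rcons (bdN T k') k
      else let s := bdN T k' in
           take (T k).-1 s ++ k :: drop (T k).-1 s
  end.

Lemma bitdrop_map V T k : bitdrop V T k = map V (bdN T k).
Proof.
elim: k => [//|k IH] /=; case: ifP => _.
  by rewrite IH map_rcons.
by rewrite IH map_cat map_take /= map_drop.
Qed.

Lemma perm_ins (s1 s2 : seq nat) x : perm_eq (s1 ++ x :: s2) (x :: s1 ++ s2).
Proof.
rewrite -cat1s perm_catCA /= perm_cons //.
Qed.

Lemma bdN_perm T k : perm_eq (bdN T k) (iota 1 k).
Proof.
elim: k => [//|k IH].
have E : iota 1 k.+1 = rcons (iota 1 k) k.+1.
  by rewrite -cats1 -(addn1 k) iotaD add1n /= addn1.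
rewrite E /=; case: ifP => _.
  by rewrite -!cats1 perm_cat2r.
apply: perm_trans (perm_ins _ _ _) _.
by rewrite cat_take_drop -cats1 perm_sym perm_catC /= perm_cons perm_sym.
Qed.

Lemma size_bitdrop V T k : size (bitdrop V T k) = k.
Proof. by rewrite bitdrop_map size_map (perm_size (bdN_perm T k)) size_iota. Qed.

Lemma bitdrop_sub V T k : subseq (bitdrop V T k) (bitdrop V T k.+1).
Proof.
rewrite [X in subseq _ X]/=; case: ifP => _.
  by rewrite -cats1 prefix_subseq.
rewrite -{1}(cat_take_drop (T k.+1).-1 (bitdrop V T k)).
by apply: cat_subseq => //; apply: subseq_cons.
Qed.

Lemma bitdrop_suble V T j k : j <= k -> subseq (bitdrop V T j) (bitdrop V T k).
Proof.
move=> /subnK <-; elim: (k - j) => [|d IH]; first by rewrite add0n.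
by rewrite addSn; apply: subseq_trans IH (bitdrop_sub _ _ _).
Qed.

Lemma lcs_sub s t : subseq s t -> lcs s t = size s.
Proof.
move=> st; apply/eqP; rewrite eqn_leq; apply/andP; split.
  apply/bigmax_leqP => m _.
  by rewrite size_mask ?size_tuple // -{2}(size_tuple m) count_size.
have := @leq_bigmax_cond _ (fun m : (size s).-tuple bool => subseq (mask m s) t)
   (fun m => size (mask m s)) (nseq_tuple (size s) true).
have E : mask (nseq_tuple (size s) true) s = s by exact: mask_true.
by rewrite /lcs; rewrite E => H; apply: H.
Qed.
Fixpoint ys (n : nat) : seq (seq bool) :=
  if n is n'.+1 then map (cons true) (ys n') ++ map (cons false) (ys n')
  else [:: [::]].

Lemma size_ys n : size (ys n) = 2 ^ n.
Proof. by elim: n => //= n IH; rewrite size_cat !size_map IH expnS mul2n addnn. Qed.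

Lemma cons_inj (b : bool) : injective (cons b).
Proof. by move=> x y []. Qed.

Lemma mem_ys n x : (x \in ys n) = (size x == n).
Proof.
elim: n x => [|n IH] [|b x] //=.
- by rewrite mem_cat; apply/orP => -[] /mapP [].
rewrite mem_cat eqSS -IH; case: b.
  rewrite (mem_map (@cons_inj true)); case: (x \in ys n) => //=.
  by apply/mapP => -[].
rewrite (mem_map (@cons_inj false)) orbC; case: (x \in ys n) => //=.
by apply/mapP => -[].
Qed.

Lemma uniq_ys n : uniq (ys n).
Proof.
elim: n => //= n IH; rewrite cat_uniq !(map_inj_uniq (@cons_inj _)) IH /=.
rewrite andbT; apply/hasP => -[x /mapP [y _ ->] /mapP [z _]] //.
Qed.

Lemma perm_ys n : perm_eq (map val (enum [set: n.-tuple bool])) (ys n).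
Proof.
apply: uniq_perm; first by rewrite map_inj_uniq ?enum_uniq //; exact: val_inj.
  exact: uniq_ys.
move=> x; rewrite mem_ys; apply/mapP/eqP => [[t _ ->]|Hx].
  exact: size_tuple.
have Hx' : size x == n by rewrite Hx.
by exists (Tuple Hx') => //; rewrite mem_enum inE.
Qed.

Lemma count_sub n z : count (subseq z) (ys n) = count (fun y => size z <= count id y) (ys n).
Proof.
elim: n z => [|n IH] z.
  by case: z.
rewrite /= !count_cat !count_map; case: z => [|a z].
  by apply: congr2; apply: eq_count => y /=.
have E1 : count (preim (cons true) (subseq (a :: z))) (ys n)
   + count (preim (cons false) (subseq (a :: z))) (ys n)
   = count (subseq z) (ys n) + count (subseq (a :: z)) (ys n).
  case: a; [congr (_ + _)|rewrite addnC; congr (_ + _)]; apply: eq_count => y /=; by [].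
rewrite E1 !IH; congr (_ + _); apply: eq_count => y //=.
Qed.

Local Open Scope ring_scope.
Lemma var_ys n : \sum_(y <- ys n) ((n%:Z - 2 * (count id y)%:Z) ^+ 2) = (n * 2 ^ n)%N%:Z.
Proof.
elim: n => [|n IH]; first by rewrite /= big_seq1.
rewrite /= big_cat !big_map /= -big_split /=.
rewrite (eq_bigr (fun y => 2 * (n%:Z - 2 * (count id y)%:Z) ^+ 2 + 2)); last first.
  move=> y _; rewrite /= !PoszD; ring.
rewrite big_split /= -mulr_sumr IH big_const_seq count_predT size_ys.
have -> : forall k, iter k (+%R (2:int)) 0 = (2 * k)%N%:Z.
  by elim=> //= k ->; rewrite mulnS PoszD.
rewrite expnS !PoszM; ring.
Qed.

Lemma count_le_sum (T : Type) (P : pred T) (f : T -> int) (a : int) s :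
  (forall y, 0 <= f y) -> (forall y, P y -> a <= f y) ->
  (count P s)%:Z * a <= \sum_(y <- s) f y.
Proof.
move=> f0 fa; elim: s => [|y s IH]; first by rewrite big_nil mul0r.
rewrite big_cons /= PoszD mulrDl lerD //.
by case: (P y) (fa y) => /= [h|_]; [rewrite mul1r; exact: h | rewrite mul0r].
Qed.

Lemma pt n c : (c < mE1 n)%N -> (n%:Z) ^+ 2 <= 100 * (n%:Z - 2 * c%:Z) ^+ 2.
Proof.
rewrite /mE1 => H.
have H2 : (n <= 10 * (n - 2 * c))%N /\ (2 * c <= n)%N by lia.
case: H2 => H2 H3.
rewrite !expr2; nia.
Qed.


Lemma cheb n : (count (fun y => count id y < mE1 n) (ys n) * n <= 100 * 2 ^ n)%N.
Proof.
have := @count_le_sum _ (fun y => (count id y < mE1 n)%N)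
  (fun y => 100 * (n%:Z - 2 * (count id y)%:Z) ^+ 2) (n%:Z ^+ 2) (ys n).
rewrite -mulr_sumr var_ys => H.
have {}H : (count (fun y => count id y < mE1 n) (ys n) * n * n <= 100 * 2 ^ n * n)%N.
  have H' := H (fun y => mulr_ge0 (ler0n _ _) (sqr_ge0 _)) (fun y => @pt n _).
  rewrite -lez_nat !PoszM -mulrA -expr2; apply: le_trans H' _.
  by rewrite PoszM mulrA mulrAC.
case: n H => [|n]; first by rewrite muln0.
by rewrite leq_pmul2r.
Qed.
Local Close Scope ring_scope.
Lemma perm_phi m p : perm_eq p (iota 1 m) ->
  perm_eq (map (fun v => map (fun j => nth false v j.-1) p) (ys m)) (ys m).
Proof.
move=> pp.
set phi := fun v => _.
have inj : {in ys m &, injective phi}.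
  move=> v1 v2; rewrite !mem_ys => /eqP s1 /eqP s2 E.
  apply: (@eq_from_nth _ false); first by rewrite s1 s2.
  move=> i; rewrite s1 => lti.
  have ip : i.+1 \in p by rewrite (perm_mem pp) mem_iota; apply/andP; split.
  have : nth false (phi v1) (index i.+1 p) = nth false (phi v2) (index i.+1 p) by rewrite E.
  by rewrite /phi !(nth_map 0) ?index_mem // nth_index.
have U : uniq (map phi (ys m)) by rewrite (map_inj_in_uniq inj) uniq_ys.
apply: uniq_perm => //; first exact: uniq_ys.
have sub : {subset map phi (ys m) <= ys m}.
  move=> x /mapP [v _ ->]; rewrite mem_ys size_map (perm_size pp) size_iota //.
have le : (size (ys m) <= size (map phi (ys m)))%N by rewrite size_map.
exact: (uniq_min_size U sub le).2.
Qed.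

Lemma sum_phi m p (Q : seq bool -> nat) : perm_eq p (iota 1 m) ->
  \sum_(v <- ys m) Q (map (fun j => nth false v j.-1) p) = \sum_(z <- ys m) Q z.
Proof. by move=> pp; symmetry; rewrite -(perm_big _ (perm_phi m p pp)) big_map. Qed.

Lemma count_sum (T : Type) (P : pred T) s : count P s = \sum_(x <- s) (P x : nat).
Proof. elim: s => [|x s IH]; first by rewrite big_nil. by rewrite big_cons /= IH. Qed.

Lemma sum_outcomes n (F : seq bool * seq bool * seq nat -> nat) :
  \sum_(w <- outcomes n) F w =
  \sum_(y <- ys n) \sum_(v <- ys (mE1 n)) \sum_(t <- tseqs (mE1 n)) F (y, v, t).
Proof.
rewrite /outcomes big_flatten big_map.
rewrite -(perm_big _ (perm_ys n)) big_map; apply: eq_bigr => y _.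
rewrite big_flatten big_map.
rewrite -(perm_big _ (perm_ys (mE1 n))) big_map; apply: eq_bigr => v _.
by rewrite big_map.
Qed.

Definition G n (w : seq bool * seq bool * seq nat) : bool :=
  let: (y, v, t) := w in
  subseq (bitdrop (fun j => nth false v j.-1) (fun j => nth 0 t (j - 3)) (mE1 n)) y.

Lemma size_tseqs k : 0 < size (tseqs k).
Proof.
elim: k => [//|k IH] /=; case: ifP => // /negbT; rewrite -leqNgt => k2.
by rewrite size_allpairs muln_gt0 IH size_iota; case: k k2 IH => [|[|k]].
Qed.

Lemma count_predC_sub n z : z \in ys (mE1 n) ->
  count (predC (subseq z)) (ys n) = count (fun y => count id y < mE1 n) (ys n).
Proof.
rewrite mem_ys => /eqP sz.
have h1 := count_predC (subseq z) (ys n).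
have h2 := count_predC (fun y => size z <= count id y) (ys n).
have h3 : count (predC (fun y => size z <= count id y)) (ys n) =
          count (fun y => count id y < mE1 n) (ys n).
  by apply: eq_count => y /=; rewrite sz ltnNge.
rewrite count_sub in h1.
by apply/eqP; rewrite -h3 -(eqn_add2l (count (fun y => size z <= count id y) (ys n))) h1 h2.
Qed.

Lemma size_outcomes n : size (outcomes n) = 2 ^ n * 2 ^ mE1 n * size (tseqs (mE1 n)).
Proof.
set m := mE1 n; set T := tseqs m.
  rewrite -count_predT count_sum sum_outcomes.
  rewrite (eq_bigr (fun _ => 2 ^ m * size T)); last first.
    move=> y _; rewrite (eq_bigr (fun _ => size T)); last first.
      by move=> v _; rewrite big_const_seq count_predT iter_addn_0 mul1n.
    by rewrite big_const_seq count_predT iter_addn_0 size_ys mulnC.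
  by rewrite big_const_seq count_predT iter_addn_0 size_ys mulnC mulnA.
Qed.

Lemma bad n : count (predC (G n)) (outcomes n) * n <= 100 * size (outcomes n).
Proof.
set m := mE1 n; set T := tseqs m.
set B := count (fun y => count id y < m) (ys n).
have Hy y : \sum_(v <- ys m) \sum_(t <- T) (predC (G n) (y, v, t) : nat) =
            size T * \sum_(z <- ys m) (~~ subseq z y : nat).
  rewrite exchange_big /=.
  rewrite (eq_bigr (fun t => \sum_(z <- ys m) (~~ subseq z y : nat)));
    first by rewrite big_const_seq count_predT iter_addn_0 mulnC.
  move=> t _.
  rewrite -(@sum_phi m _ (fun z => (~~ subseq z y : nat)) (bdN_perm (fun j => nth 0 t (j - 3)) m)).
  by apply: eq_bigr => v _; rewrite bitdrop_map.
have L : count (predC (G n)) (outcomes n) = size T * (2 ^ m * B).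
  rewrite count_sum sum_outcomes (eq_bigr _ (fun y _ => Hy y)) -big_distrr /=.
  congr (_ * _); rewrite exchange_big /= big_seq.
  rewrite (eq_bigr (fun _ => B)); last first.
    by move=> z zin; rewrite -count_sum; exact: count_predC_sub.
  by rewrite -big_seq big_const_seq count_predT iter_addn_0 size_ys mulnC.
have S := size_outcomes n.
rewrite L S.
have := cheb n; rewrite -/m -/B => C.
have := leq_mul (leqnn (size T * 2 ^ m)) C.
have -> : size T * (2 ^ m * B) * n = size T * 2 ^ m * (B * n) by rewrite !mulnA.
have -> : 100 * (2 ^ n * 2 ^ m * size T) = size T * 2 ^ m * (100 * 2 ^ n) by nia.
by [].
Qed.

Lemma G_E1 n w : G n w -> E1 n w.
Proof.
case: w => [[y v] t] /= H; apply/allP => k; rewrite mem_iota => /andP [k1 k2].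
rewrite lcs_sub ?size_bitdrop //.
apply: subseq_trans H; apply: bitdrop_suble; rewrite -ltnS -(add1n (mE1 n)) //.
Qed.

Local Open Scope ring_scope.

Lemma key (R : realType) n : (0 < n)%N ->
  0 <= 1 - probE1 R n <= 100 / n%:R.
Proof.
move=> n0.
set N := size (outcomes n).
have N0 : (0 < N)%N by rewrite /N size_outcomes !muln_gt0 !expn_gt0 size_tseqs.
have hG := sub_count (@G_E1 n) (outcomes n).
have hE := count_size (E1 n) (outcomes n).
have hC := count_predC (G n) (outcomes n).
have hB := bad n.
have H1 : ((N - count (E1 n) (outcomes n)) * n <= 100 * N)%N.
  apply: leq_trans hB; apply: leq_mul => //; rewrite -/N; lia.
have Nr : (0 : R) < N%:R by rewrite ltr0n.
have nr : (0 : R) < n%:R by rewrite ltr0n.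
have a1 : (count (E1 n) (outcomes n))%:R <= N%:R :> R by rewrite ler_nat.
have a2 : (N%:R - (count (E1 n) (outcomes n))%:R) * n%:R <= 100 * N%:R :> R.
  have -> : (100 : R) * N%:R = (100 * N)%N%:R by rewrite natrM.
  by rewrite -natrB // -natrM ler_nat.
rewrite /probE1 -/N; apply/andP; split.
  by rewrite subr_ge0 ler_pdivrMr // mul1r.
rewrite (_ : 1 - _ = (N%:R - (count (E1 n) (outcomes n))%:R) / N%:R); last first.
  by field; rewrite lt0r_neq0.
rewrite ler_pdivrMr // mulrAC ler_pdivlMr //.
Qed.

Local Open Scope ring_scope.
Local Open Scope classical_set_scope.

Theorem lemma6 (R : realType) : probE1 R n @[n --> \oo] --> (1 : R).
Proof.
apply/cvgrPdist_le => e e0.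
near=> n.
have n0 : (0 < n)%N by near: n; exact: nbhs_infty_gt.
have /andP [h1 h2] := @key R n n0.
rewrite ger0_norm //; apply: le_trans h2 _.
rewrite ler_pdivrMr ?ltr0n // mulrC -ler_pdivrMr //.
near: n; exact: nbhs_infty_ger.
Unshelve. all: by end_near.
Qed.
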